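(* Let $A:\mathbb{R}^n\to\mathbb{R}^m$ be a bounded linear operator, let $u^\dagger\in\mathbb{R}^n$, $v:=Au^\dagger$, let $\wp>0$ and assume $\|u^\dagger-u_0\|\le\wp$ where $u_0=\Psi(v)$. Let $\{u_k\}_{k\ge0}$ be the iterates of the IRMGL+$\Psi$ iteration with exact data described in the context, and assume $$C_0:=\eta-\nu_0(\wp+\nu_1)-\eta_0\eta_1>0.$$ Then $\|u_k-u^\dagger\|\le\wp$ for all $k\ge0$, $$\|u_{k+1}-u^\dagger\|^2-\|u_k-u^\dagger\|^2\le-2C_0\|Au_k-v\|^2\quad\text{for all }k\ge0,$$ the sequence $\{\|u_k-u^\dagger\|\}_{k\ge0}$ is monotonically decreasing, and $$\sum_{k=0}^\infty\|Au_k-v\|^2\le\frac{1}{2C_0}\|u_0-u^\dagger\|^2<\infty;$$ in particular $\|Au_k-v\|\to0$ as $k\to\infty$.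
   Context: All norms are Euclidean norms, $A^*=A^\top$. Vectors $u\in\mathbb{R}^n$ are images: $n=pq$, pixel set $S=\{(i,j):1\le i\le p,1\le j\le q\}$, $u$ identified with $u:S\to\mathbb{R}$. Graph Laplacian built from $u$: fix $R>0$, $\sigma>0$, a distance $\eth$ on $S$; $g(a,b)=1$ if $0<\eth(a,b)\le R$, else $0$; $h_u(a,b)=\exp(-|u(a)-u(b)|^2/\sigma)$; $w_u=g\,h_u$; $W_u=[w_u(a,b)]$, $D_u=\mathrm{diag}(\sum_b w_u(a,b))$, $\Delta_u=D_u-W_u$. Exact-data iteration: for a map $\Psi:\mathbb{R}^m\to\mathbb{R}^n$, $u_0=\Psi(v)$, $u_{k+1}=u_k-\alpha_kA^*(Au_k-v)-\beta_k\Delta_{u_k}u_k$, where with constants $\eta_0,\eta_1,\nu_0,\nu_1,\nu_2>0$: $\alpha_k=\min\{\eta_0\|Au_k-v\|^2/\|A^*(Au_k-v)\|^2,\eta_1\}$ when $Au_k\ne v$ (when $Au_k=v$ the term $\alpha_kA^*(Au_k-v)$ vanishes); $\beta_k=\min\{\nu_0\|Au_k-v\|^2/\|\Delta_{u_k}u_k\|,\nu_1/\|\Delta_{u_k}u_k\|,\nu_2\}$ if $\Delta_{u_k}u_k\ne0$, else $\beta_k=0$. $\eta$ is a fixed constant with $0<\eta\le\min\{\eta_0/\|A\|^2,\eta_1\}$. *)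

(* Defs.v *)
From HB Require Import structures.
From mathcomp Require Import all_boot all_order all_algebra.
From mathcomp Require Import all_classical all_reals all_analysis.
Set Implicit Arguments. Unset Strict Implicit. Unset Printing Implicit Defensive.
Import Order.TTheory GRing.Theory Num.Theory.
Local Open Scope ring_scope.
Local Open Scope classical_set_scope.

Section Defs.
Variable R : realType.

Definition vnorm (n : nat) (x : 'cV[R]_n) : R :=
  Num.sqrt (\sum_(i < n) (x i 0) ^+ 2).

Definition opnorm (m n : nat) (A : 'M[R]_(m, n)) : R :=
  sup [set vnorm (A *m x) | x in [set x : 'cV[R]_n | vnorm x <= 1]].

(* Pixel set S = {1..p} x {1..q} (0-based here), identified with 'I_(p*q)
   through a fixed bijection. *)
Lemma pix_card (p q : nat) : #|{: 'I_p * 'I_q}| = (p * q)%N.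
Proof. by rewrite card_prod !card_ord. Qed.

Definition pixel_of (p q : nat) (k : 'I_(p * q)) : 'I_p * 'I_q :=
  enum_val (cast_ord (esym (pix_card p q)) k).

Definition is_distance (p q : nat) (eth : 'I_p * 'I_q -> 'I_p * 'I_q -> R) :=
  [/\ forall a b, 0 <= eth a b,
      forall a b, eth a b = 0 <-> a = b,
      forall a b, eth a b = eth b a
    & forall a b c, eth a c <= eth a b + eth b c].

Definition gw (p q : nat) (eth : 'I_p * 'I_q -> 'I_p * 'I_q -> R) (Rad : R)
  (a b : 'I_p * 'I_q) : R :=
  if (0 < eth a b) && (eth a b <= Rad) then 1 else 0.

Definition hw (p q : nat) (sigma : R) (u : 'cV[R]_(p * q)) (k l : 'I_(p * q)) : R :=
  expR (- ((`|u k 0 - u l 0|) ^+ 2) / sigma).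

Definition Wmat (p q : nat) (eth : 'I_p * 'I_q -> 'I_p * 'I_q -> R) (Rad sigma : R)
  (u : 'cV[R]_(p * q)) : 'M[R]_(p * q) :=
  \matrix_(k, l) (gw eth Rad (pixel_of k) (pixel_of l) * hw sigma u k l).

Definition Dmat (p q : nat) (eth : 'I_p * 'I_q -> 'I_p * 'I_q -> R) (Rad sigma : R)
  (u : 'cV[R]_(p * q)) : 'M[R]_(p * q) :=
  diag_mx (\row_k (\sum_l Wmat eth Rad sigma u k l)).

Definition Lap (p q : nat) (eth : 'I_p * 'I_q -> 'I_p * 'I_q -> R) (Rad sigma : R)
  (u : 'cV[R]_(p * q)) : 'M[R]_(p * q) :=
  Dmat eth Rad sigma u - Wmat eth Rad sigma u.

Definition alpha_k (m n : nat) (A : 'M[R]_(m, n)) (v : 'cV[R]_m) (eta0 eta1 : R)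
  (u : 'cV[R]_n) : R :=
  let r := A *m u - v in
  if r == 0 then 0 (* the term alpha_k A^*(Au_k - v) vanishes anyway *)
  else Num.min (eta0 * vnorm r ^+ 2 / vnorm (A^T *m r) ^+ 2) eta1.

Definition beta_k (m p q : nat) (A : 'M[R]_(m, p * q)) (v : 'cV[R]_m)
  (eth : 'I_p * 'I_q -> 'I_p * 'I_q -> R) (Rad sigma nu0 nu1 nu2 : R)
  (u : 'cV[R]_(p * q)) : R :=
  let L := Lap eth Rad sigma u *m u in
  if L == 0 then 0
  else Num.min (Num.min (nu0 * vnorm (A *m u - v) ^+ 2 / vnorm L)
                        (nu1 / vnorm L)) nu2.

Definition irm_step (m p q : nat) (A : 'M[R]_(m, p * q)) (v : 'cV[R]_m)
  (eth : 'I_p * 'I_q -> 'I_p * 'I_q -> R) (Rad sigma eta0 eta1 nu0 nu1 nu2 : R)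
  (u : 'cV[R]_(p * q)) : 'cV[R]_(p * q) :=
  u - alpha_k A v eta0 eta1 u *: (A^T *m (A *m u - v))
    - beta_k A v eth Rad sigma nu0 nu1 nu2 u *: (Lap eth Rad sigma u *m u).

Definition irm_iter (m p q : nat) (A : 'M[R]_(m, p * q)) (v : 'cV[R]_m)
  (Psi : 'cV[R]_m -> 'cV[R]_(p * q))
  (eth : 'I_p * 'I_q -> 'I_p * 'I_q -> R) (Rad sigma eta0 eta1 nu0 nu1 nu2 : R)
  (k : nat) : 'cV[R]_(p * q) :=
  iter k (irm_step A v eth Rad sigma eta0 eta1 nu0 nu1 nu2) (Psi v).

End Defs.

(* Main.v *)
Require Import Defs.
From HB Require Import structures.
From mathcomp Require Import all_boot all_order all_algebra.
From mathcomp Require Import all_classical all_reals all_analysis.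
From mathcomp Require Import ring lra.
Import numFieldNormedType.Exports.
Set Implicit Arguments. Unset Strict Implicit. Unset Printing Implicit Defensive.
Import Order.TTheory GRing.Theory Num.Theory.
Local Open Scope ring_scope.
Local Open Scope classical_set_scope.

Section H.
Variable R : realType.

Definition dot (n : nat) (x y : 'cV[R]_n) : R := \sum_(i < n) x i 0 * y i 0.

Lemma vnorm_ge0 n (x : 'cV[R]_n) : 0 <= vnorm x.
Proof. exact: sqrtr_ge0. Qed.

Lemma dot_ge0 n (x : 'cV[R]_n) : 0 <= dot x x.
Proof. by apply: sumr_ge0 => i _; rewrite -expr2 sqr_ge0. Qed.

Lemma vnorm_sq n (x : 'cV[R]_n) : vnorm x ^+ 2 = dot x x.
Proof.
rewrite /vnorm sqr_sqrtr; last by apply: sumr_ge0 => i _; rewrite sqr_ge0.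
by apply: eq_bigr => i _; rewrite expr2.
Qed.

Lemma dotC n (x y : 'cV[R]_n) : dot x y = dot y x.
Proof. by apply: eq_bigr => i _; rewrite mulrC. Qed.

Lemma dotDl n (x y w : 'cV[R]_n) : dot (x + y) w = dot x w + dot y w.
Proof. by rewrite /dot -big_split; apply: eq_bigr => i _; rewrite !mxE mulrDl. Qed.

Lemma dotNl n (x w : 'cV[R]_n) : dot (- x) w = - dot x w.
Proof. by rewrite /dot -sumrN; apply: eq_bigr => i _; rewrite !mxE mulNr. Qed.

Lemma dotZl n a (x w : 'cV[R]_n) : dot (a *: x) w = a * dot x w.
Proof. by rewrite /dot mulr_sumr; apply: eq_bigr => i _; rewrite !mxE mulrA. Qed.

Lemma dotDr n (x y w : 'cV[R]_n) : dot w (x + y) = dot w x + dot w y.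
Proof. by rewrite !(dotC w) dotDl. Qed.
Lemma dotNr n (x w : 'cV[R]_n) : dot w (- x) = - dot w x.
Proof. by rewrite !(dotC w) dotNl. Qed.
Lemma dotZr n a (x w : 'cV[R]_n) : dot w (a *: x) = a * dot w x.
Proof. by rewrite !(dotC w) dotZl. Qed.

Lemma dot_tr m n (A : 'M[R]_(m, n)) x y : dot x (A^T *m y) = dot (A *m x) y.
Proof.
rewrite /dot.
under eq_bigr do rewrite mxE big_distrr /=.
under [RHS]eq_bigr do rewrite mxE big_distrl /=.
rewrite exchange_big; apply: eq_bigr => i _; apply: eq_bigr => j _.
by rewrite !mxE mulrCA mulrA.
Qed.

Lemma vnorm0 n (x : 'cV[R]_n) : vnorm x = 0 -> forall i, x i 0 = 0.
Proof.
move=> /eqP; rewrite sqrtr_eq0 => H i.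
have H0 : \sum_(i < n) x i 0 ^+ 2 = 0.
  by apply/eqP; rewrite eq_le H; apply: sumr_ge0 => j _; rewrite sqr_ge0.
have := psumr_eq0P (fun j _ => sqr_ge0 (x j 0)) H0; move=> /(_ i isT).
by move/eqP; rewrite sqrf_eq0 => /eqP.
Qed.

Lemma vnorm_eq0 n (x : 'cV[R]_n) : vnorm x = 0 -> x = 0.
Proof. by move=> H; apply/matrixP => i j; rewrite ord1 mxE; apply: vnorm0. Qed.

Lemma CS n (x y : 'cV[R]_n) : dot x y <= vnorm x * vnorm y.
Proof.
have [a0|] := eqVneq (vnorm x) 0.
  by rewrite a0 mul0r /dot big1 // => i _; rewrite vnorm0 // mul0r.
have [b0|] := eqVneq (vnorm y) 0.
  by rewrite b0 mulr0 /dot big1 // => i _; rewrite (vnorm0 b0) mulr0.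
move=> bn0 an0.
have a0 : 0 < vnorm x by rewrite lt_def an0 vnorm_ge0.
have b0 : 0 < vnorm y by rewrite lt_def bn0 vnorm_ge0.
have := dot_ge0 (vnorm y *: x - vnorm x *: y).
rewrite !(dotDl, dotDr, dotNl, dotNr, dotZl, dotZr) -!vnorm_sq (dotC y x).
move=> H.
have : 0 <= 2 * (vnorm x * vnorm y) * (vnorm x * vnorm y - dot x y) by lra.
by rewrite pmulr_rge0 ?subr_ge0 // mulr_gt0 // mulr_gt0.
Qed.


Lemma vnormN n (x : 'cV[R]_n) : vnorm (- x) = vnorm x.
Proof. by rewrite /vnorm; congr Num.sqrt; apply: eq_bigr => i _; rewrite mxE sqrrN. Qed.

Lemma vnormZ n c (x : 'cV[R]_n) : vnorm (c *: x) = `|c| * vnorm x.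
Proof.
rewrite /vnorm; under eq_bigr do rewrite mxE exprMn.
by rewrite -mulr_sumr sqrtrM ?sqr_ge0 // sqrtr_sqr.
Qed.

Lemma vnorm_0 n : vnorm (0 : 'cV[R]_n) = 0.
Proof. by rewrite /vnorm big1 ?sqrtr0 // => i _; rewrite mxE expr0n. Qed.

Lemma CS2 n (x y : 'cV[R]_n) : dot x y ^+ 2 <= dot x x * dot y y.
Proof.
have h1 := CS x y; have h2 := CS (- x) y.
rewrite dotNl vnormN in h2.
rewrite -!vnorm_sq.
have ha := vnorm_ge0 x; have hb := vnorm_ge0 y.
nra.
Qed.

Lemma opnorm_ub m n (A : 'M[R]_(m, n)) :
  has_ubound [set vnorm (A *m x) | x in [set x : 'cV[R]_n | vnorm x <= 1]].
Proof.
exists (1 + \sum_(i < m) dot (row i A)^T (row i A)^T).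
move=> y [x /= hx <-].
have hF : vnorm (A *m x) ^+ 2 <= \sum_(i < m) dot (row i A)^T (row i A)^T.
  rewrite vnorm_sq /dot; apply: ler_sum => i _.
  have -> : (A *m x) i 0 = dot (row i A)^T x.
    by rewrite /dot mxE; apply: eq_bigr => j _; rewrite !mxE.
  have := CS2 (row i A)^T x.
  rewrite -[dot x x]vnorm_sq -[dot (row i A)^T _]/(dot _ _).
  have h0 := dot_ge0 (row i A)^T.
  have hx0 := vnorm_ge0 x.
  move=> h; rewrite -expr2; apply: (le_trans h).
  rewrite /dot. set s := \sum_(_ < _) _.
  have -> : s = dot (row i A)^T (row i A)^T by [].
  have : vnorm x ^+ 2 <= 1 by nra.
  nra.
have := vnorm_ge0 (A *m x).
nra.
Qed.

Lemma opnorm_ge0 m n (A : 'M[R]_(m, n)) : 0 <= opnorm A.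
Proof.
have /ubP := ub_le_sup (opnorm_ub A); apply; exists 0 => /=; first by rewrite vnorm_0.
by rewrite mulmx0 vnorm_0.
Qed.

Lemma opnorm_bound m n (A : 'M[R]_(m, n)) x : vnorm (A *m x) <= opnorm A * vnorm x.
Proof.
have [x0|xn0] := eqVneq (vnorm x) 0.
  by move: x0 => /vnorm_eq0 ->; rewrite mulmx0 !vnorm_0 mulr0.
have xp : 0 < vnorm x by rewrite lt_def xn0 vnorm_ge0.
have h : vnorm (A *m ((vnorm x)^-1 *: x)) <= opnorm A.
  have /ubP := ub_le_sup (opnorm_ub A); apply; exists ((vnorm x)^-1 *: x) => //=.
  by rewrite vnormZ ger0_norm ?invr_ge0 ?vnorm_ge0 // mulVf.
rewrite -scalemxAr vnormZ ger0_norm ?invr_ge0 ?vnorm_ge0 // in h.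
by rewrite -ler_pdivrMr // mulrC.
Qed.


Lemma alpha_facts m n (A : 'M[R]_(m, n)) udag (w : 'cV[R]_n) eta eta0 eta1 :
  0 < eta0 -> 0 < eta1 -> 0 < eta -> eta * opnorm A ^+ 2 <= eta0 -> eta <= eta1 ->
  let v := A *m udag in
  let a := alpha_k A v eta0 eta1 w in
  let r := A *m w - v in
  let g := A^T *m r in
  [/\ 0 <= a, a <= eta1, a * vnorm g ^+ 2 <= eta0 * vnorm r ^+ 2
    & eta * vnorm r ^+ 2 <= a * vnorm r ^+ 2].
Proof.
move=> h0 h1 he hop he1 v a r g.
have hr : dot (w - udag) g = vnorm r ^+ 2.
  by rewrite /g dot_tr mulmxBr vnorm_sq.
rewrite /a /alpha_k /= -/r -/g.
have [r0|rn0] := eqVneq r 0.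
  by rewrite r0 vnorm_0 expr0n /= !mulr0 mul0r; split => //; exact: ltW.
have vr : 0 < vnorm r.
  rewrite lt_def vnorm_ge0 andbT; apply/eqP => /vnorm_eq0; exact/eqP.
have vg : 0 < vnorm g.
  rewrite lt_def vnorm_ge0 andbT; apply/eqP => g0.
  have := CS (w - udag) g; rewrite hr g0 mulr0.
  have : 0 < vnorm r ^+ 2 by rewrite exprn_gt0.
  move=> h1' h2'; lra.
have hgop : vnorm g <= opnorm A * vnorm r.
  have h1' : vnorm g ^+ 2 <= opnorm A * vnorm g * vnorm r.
    rewrite vnorm_sq {2}/g dot_tr.
    apply: (le_trans (CS _ _)).
    by rewrite ler_wpM2r ?vnorm_ge0 // opnorm_bound.
  rewrite expr2 -mulrA [_ * vnorm r]mulrC mulrA in h1'.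
  by rewrite -(ler_pM2r vg) mulrC.
have hG : vnorm g ^+ 2 <= opnorm A ^+ 2 * vnorm r ^+ 2.
  by rewrite -exprMn lerXn2r // ?nnegrE ?vnorm_ge0 // mulr_ge0 ?opnorm_ge0 ?vnorm_ge0.
set X := eta0 * vnorm r ^+ 2 / vnorm g ^+ 2.
have G0 : 0 < vnorm g ^+ 2 by rewrite exprn_gt0.
have X0 : 0 <= X by rewrite divr_ge0 // ?mulr_ge0 ?sqr_ge0 // ltW.
have XG : X * vnorm g ^+ 2 = eta0 * vnorm r ^+ 2 by rewrite /X mulfVK // gt_eqF.
have eX : eta <= X.
  rewrite /X ler_pdivlMr //.
  apply: (le_trans (ler_wpM2l (ltW he) hG)).
  by rewrite mulrA ler_wpM2r // sqr_ge0.
split.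
- by rewrite le_min X0 ltW.
- by rewrite ge_min lexx orbT.
- rewrite -XG ler_wpM2r ?sqr_ge0 //; by rewrite ge_min lexx.
- by rewrite ler_wpM2r ?sqr_ge0 // le_min eX.
Qed.


Lemma beta_facts m p q (A : 'M[R]_(m, p * q)) v eth Rad sigma nu0 nu1 nu2 w :
  0 < nu0 -> 0 < nu1 -> 0 < nu2 ->
  let b := beta_k A v eth Rad sigma nu0 nu1 nu2 w in
  let L := Lap eth Rad sigma w *m w in
  [/\ 0 <= b, b * vnorm L <= nu1 & b * vnorm L <= nu0 * vnorm (A *m w - v) ^+ 2].
Proof.
move=> h0 h1 h2 b L.
rewrite /b /beta_k /= -/L.
have [L0|Ln0] := eqVneq L 0.
  by rewrite mul0r; split => //; [exact: ltW | rewrite mulr_ge0 ?sqr_ge0 // ltW].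
have vL : 0 < vnorm L.
  rewrite lt_def vnorm_ge0 andbT; apply/eqP => /vnorm_eq0; exact/eqP.
set Y1 := nu0 * _ / _; set Y2 := nu1 / _.
have Y10 : 0 <= Y1 by rewrite divr_ge0 ?mulr_ge0 ?sqr_ge0 ?vnorm_ge0 // ltW.
have Y20 : 0 <= Y2 by rewrite divr_ge0 ?vnorm_ge0 // ltW.
split.
- by rewrite !le_min Y10 Y20 ltW.
- apply: (@le_trans _ _ (Y2 * vnorm L)).
    by rewrite ler_wpM2r ?vnorm_ge0 // !ge_min lexx !orbT.
  by rewrite /Y2 mulfVK // gt_eqF.
- apply: (@le_trans _ _ (Y1 * vnorm L)).
    by rewrite ler_wpM2r ?vnorm_ge0 // !ge_min lexx.
  by rewrite /Y1 mulfVK // gt_eqF.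
Qed.

Lemma expand3 n (e g L : 'cV[R]_n) a b :
  dot (e - a *: g - b *: L) (e - a *: g - b *: L) =
  dot e e + a * a * dot g g + b * b * dot L L - 2 * a * dot e g
  - 2 * b * dot e L + 2 * a * b * dot g L.
Proof.
rewrite !(dotDl, dotDr, dotNl, dotNr, dotZl, dotZr).
rewrite (dotC g e) (dotC L e) (dotC L g); ring.
Qed.

Lemma expand2 n (g L : 'cV[R]_n) a b :
  dot (a *: g - b *: L) (a *: g - b *: L) =
  a * a * dot g g + b * b * dot L L - 2 * a * b * dot g L.
Proof.
rewrite !(dotDl, dotDr, dotNl, dotNr, dotZl, dotZr).
rewrite (dotC L g); ring.
Qed.

Lemma step_bound m p q (A : 'M[R]_(m, p * q)) udag eth Rad sigma
    eta eta0 eta1 nu0 nu1 nu2 wp w :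
  0 < eta0 -> 0 < eta1 -> 0 < nu0 -> 0 < nu1 -> 0 < nu2 -> 0 < eta ->
  eta * opnorm A ^+ 2 <= eta0 -> eta <= eta1 -> vnorm (w - udag) <= wp ->
  let v := A *m udag in
  vnorm (irm_step A v eth Rad sigma eta0 eta1 nu0 nu1 nu2 w - udag) ^+ 2
    - vnorm (w - udag) ^+ 2
  <= - 2 * (eta - nu0 * (wp + nu1) - eta0 * eta1) * vnorm (A *m w - v) ^+ 2.
Proof.
move=> h0 h1 n0 n1 n2 he hop he1 hw; cbv zeta; set v := A *m udag.
have [a0 a1 aG ar] := alpha_facts udag w h0 h1 he hop he1.
have [b0 b1 b2] := beta_facts A v eth Rad sigma w n0 n1 n2.
rewrite -/v in a0 a1 aG ar.
set a := alpha_k A v eta0 eta1 w in a0 a1 aG ar *.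
set b := beta_k A v eth Rad sigma nu0 nu1 nu2 w in b0 b1 b2 *.
set r := A *m w - v in aG ar b2 *.
set g := A^T *m r in aG *.
set L := Lap eth Rad sigma w *m w in b1 b2 *.
set e := w - udag in hw *.
have -> : irm_step A v eth Rad sigma eta0 eta1 nu0 nu1 nu2 w - udag
    = e - a *: g - b *: L.
  by rewrite /irm_step -/r -/g -/a -/L -/b /e; apply/matrixP => i j; rewrite !mxE; ring.
have hr : dot e g = vnorm r ^+ 2 by rewrite /g /e dot_tr mulmxBr vnorm_sq.
have f1 := dot_ge0 (a *: g - b *: L).
have f2 := CS (- e) L.
rewrite dotNl vnormN in f2.
rewrite expand2 in f1.
rewrite vnorm_sq expand3 hr -(vnorm_sq e).
rewrite -(vnorm_sq g) -(vnorm_sq L) in f1 *.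
have ve := vnorm_ge0 e; have vL := vnorm_ge0 L.
have r0 : 0 <= vnorm r ^+ 2 by rewrite sqr_ge0.
have p1 : a * a * vnorm g ^+ 2 <= eta1 * eta0 * vnorm r ^+ 2.
  rewrite -mulrA -(mulrA eta1); apply: (le_trans (ler_wpM2l a0 aG)).
  by rewrite ler_wpM2r // mulr_ge0 // ltW.
have p2 : b * b * vnorm L ^+ 2 <= nu1 * nu0 * vnorm r ^+ 2.
  have -> : b * b * vnorm L ^+ 2 = (b * vnorm L) * (b * vnorm L) by rewrite expr2; ring.
  have bL : 0 <= b * vnorm L by rewrite mulr_ge0.
  rewrite -[nu1 * nu0 * _]mulrA; exact: ler_pM.

have p3 : vnorm e * (b * vnorm L) <= wp * (nu0 * vnorm r ^+ 2).
  by apply: ler_pM => //; rewrite ?mulr_ge0.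
have hq : - (b * dot e L) <= vnorm e * (b * vnorm L).
  rewrite -mulrN mulrCA; apply: ler_wpM2l => //.
have hq2 : - (b * dot e L) <= wp * nu0 * vnorm r ^+ 2.
  rewrite -mulrA; exact: le_trans hq p3.
lra.
Qed.

End H.

Unset Implicit Arguments.

Theorem lemma3p8 (R : realType) (m p q : nat) (A : 'M[R]_(m, p * q))
  (udag : 'cV[R]_(p * q)) (Psi : 'cV[R]_m -> 'cV[R]_(p * q))
  (eth : 'I_p * 'I_q -> 'I_p * 'I_q -> R) (Rad sigma : R)
  (eta eta0 eta1 nu0 nu1 nu2 wp : R) :
  is_distance eth -> 0 < Rad -> 0 < sigma ->
  0 < eta0 -> 0 < eta1 -> 0 < nu0 -> 0 < nu1 -> 0 < nu2 ->
  0 < eta -> eta * opnorm A ^+ 2 <= eta0 -> eta <= eta1 ->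
  0 < wp ->
  vnorm (udag - Psi (A *m udag)) <= wp ->
  let v := A *m udag in
  let u := irm_iter A v Psi eth Rad sigma eta0 eta1 nu0 nu1 nu2 in
  let C0 := eta - nu0 * (wp + nu1) - eta0 * eta1 in
  0 < C0 ->
  [/\ (forall k, vnorm (u k - udag) <= wp),
      (forall k, vnorm (u k.+1 - udag) ^+ 2 - vnorm (u k - udag) ^+ 2
                   <= - 2 * C0 * vnorm (A *m u k - v) ^+ 2),
      (forall k, vnorm (u k.+1 - udag) <= vnorm (u k - udag)),
      (\sum_(0 <= k <oo) ((vnorm (A *m u k - v) ^+ 2)%:E)
         <= ((2 * C0)^-1 * vnorm (u 0%N - udag) ^+ 2)%:E)%E
    & (fun k => vnorm (A *m u k - v)) @ \oo --> 0].
Proof.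
move=> hd hR hs h0 h1 n0 n1 n2 he hop he1 hwp h0w v u C0 hC.
pose r2 k := vnorm (A *m u k - v) ^+ 2.
pose E k := vnorm (u k - udag).
have r2ge0 k : 0 <= r2 k by rewrite /r2 sqr_ge0.
have hstep k : E k <= wp -> E k.+1 ^+ 2 - E k ^+ 2 <= - 2 * C0 * r2 k.
  move=> hk; rewrite /E /u /irm_iter iterS.
  exact (step_bound (A:=A) (udag:=udag) (nu2:=nu2) (w:=u k) eth Rad sigma h0 h1 n0 n1 n2 he hop he1 hk).
have hE0 : E 0%N <= wp.
  by rewrite /E /u /irm_iter /= -vnormN opprB.
have hEge0 k : 0 <= E k by apply: vnorm_ge0.
have hmono k : E k <= wp -> E k.+1 <= E k.
  move=> hk; have := hstep k hk; have := r2ge0 k; have := hEge0 k.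
  have := hEge0 k.+1; nra.
have hall k : E k <= wp.
  elim: k => [//|k IH]; exact: le_trans (hmono k IH) IH.
have hsum N : 2 * C0 * (\sum_(0 <= k < N) r2 k) <= E 0%N ^+ 2 - E N ^+ 2.
  elim: N => [|N IH]; first by rewrite big_geq // mulr0 subrr.
  rewrite big_nat_recr //= mulrDr.
  have := hstep N (hall N); lra.
have hsumb N : \sum_(0 <= k < N) r2 k <= (2 * C0)^-1 * E 0%N ^+ 2.
  have c0 : 0 < 2 * C0 by rewrite mulr_gt0.
  rewrite mulrC ler_pdivlMr // mulrC.
  have := hsum N; have := hEge0 N; nra.
split.
- exact: hall.
- by move=> k; apply: hstep.
- by move=> k; apply: hmono.
- apply: lime_le. apply: (@is_cvg_ereal_nneg_natsum R (fun k => (r2 k)%:E) 0%N). by move=> n _; rewrite lee_fin.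
  near=> N. rewrite sumEFin lee_fin; apply: hsumb.
- have hc : cvgn (series r2).
    apply: nondecreasing_is_cvgn.
      by apply: nondecreasing_series => n _ _.
    exists ((2 * C0)^-1 * E 0%N ^+ 2) => y [N _ <-].
    exact: hsumb.
  have h2 := cvg_series_cvg_0 hc.
  have h3 := continuous_cvg _ (@sqrt_continuous R 0) h2.
  rewrite sqrtr0 in h3.
  have -> : (fun k => vnorm (A *m u k - v)) = Num.sqrt \o r2.
    by apply/funext => k /=; rewrite /r2 sqrtr_sqr ger0_norm // vnorm_ge0.
  exact: h3.
Unshelve. all: by end_near. Qed.
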